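(* Let $(f,g)$ be a Ribaucour pair of $(\mathfrak{m}^1,\mathfrak{m}^2)$-type, let $\lambda\in\mathbb{R}$, and let $\sigma_n$ be the inversion with respect to $\mathfrak{n}:=\mathfrak{m}^1+\lambda\mathfrak{m}^2+\langle\mathfrak{m}^1+\lambda\mathfrak{m}^2,\mathfrak{p}\rangle\mathfrak{p}$. Then $(f,\sigma_n(g))$ is also a Ribaucour pair, and it has the same (R-)evolution map as $(f,g)$.
   Context: Light cone model: $\mathbb{R}^{4,2}$ with form of signature $(4,2)$, light cone $\mathcal{L}$, $\mathbb{P}(\mathcal{L})$; fixed $\mathfrak{p}$ with $\langle\mathfrak{p},\mathfrak{p}\rangle=-1$; $v$ with $\langle\mathfrak{v},\mathfrak{p}\rangle=0$ are points of $\mathbb{R}^3\cup\{\infty\}$, others oriented spheres; incidence = orthogonality. Inversion in $\mathfrak{a}$ ($\langle\mathfrak{a},\mathfrak{a}\rangle\ne0$): $\sigma_a(x)=x-\frac{2\langle x,\mathfrak{a}\rangle}{\langle\mathfrak{a},\mathfrak{a}\rangle}\mathfrak{a}$; M-inversion if $\mathfrak{a}\perp\mathfrak{p}$. Discrete curves are maps from consecutive integers to points. Ribaucour pair $(f,g)$: $f_i,f_j,g_j,g_i$ concircular for each edge; with representatives satisfying $\mathfrak{f}_i-\mathfrak{f}_j+\mathfrak{g}_j-\mathfrak{g}_i=0$, the R-evolution map consists of the M-inversions in $\mathfrak{r}_{ij}=\mathfrak{f}_i-\mathfrak{f}_j=\mathfrak{g}_i-\mathfrak{g}_j$ (mapping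 $f_i\mapsto f_j$, $g_i\mapsto g_j$). The pair is of $(\mathfrak{m}^1,\mathfrak{m}^2)$-type if $\mathrm{span}\{\mathfrak{m}^1,\mathfrak{m}^2,\mathfrak{p}\}$ is 3-dimensional and consists of fixed points of all inversions of the R-evolution map. *)

(* Defs.v *)
(* Light cone model of Lie sphere geometry in R^{4,2}. *)
From HB Require Import structures.
From mathcomp Require Import all_boot all_order all_algebra.
From mathcomp Require Import reals.
Set Implicit Arguments. Unset Strict Implicit. Unset Printing Implicit Defensive.
Import Order.TTheory GRing.Theory Num.Theory.
Local Open Scope ring_scope.

Section LightCone.
Variable R : realType.

Definition vec := 'rV[R]_6.

Definition lf (x y : vec) : R :=
  \sum_(i < 6) ((if (i < 4)%N then 1 else -1) * x 0 i * y 0 i).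

(* inversion in a (meaningful when lf a a <> 0) *)
Definition inversion (a : vec) (x : vec) : vec :=
  x - ((2 * lf x a) / lf a a) *: a.

(* x is a representative of a point of R^3 \cup {oo}, i.e. of an element
   of P(L) orthogonal to p *)
Definition is_point (p v : vec) : Prop := v != 0 /\ lf v v = 0 /\ lf v p = 0.

Definition proj_eq (v w : vec) : Prop := exists c : R, c != 0 /\ w = c *: v.

Definition consecutive (D : int -> Prop) : Prop :=
  forall i j k : int, D i -> D k -> i <= j -> j <= k -> D j.

Definition edge (D : int -> Prop) (i : int) : Prop := D i /\ D (i + 1).

Definition point_curve (D : int -> Prop) (p : vec) (f : int -> vec) : Prop :=
  forall i, D i -> is_point p (f i).

Definition concircular (a b c d : vec) : Prop :=
  (\rank (col_mx (col_mx a b) (col_mx c d)) <= 3)%N.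

Definition ribaucour_pair (D : int -> Prop) (p : vec) (f g : int -> vec) : Prop :=
  point_curve D p f /\ point_curve D p g /\
  forall i, edge D i -> concircular (f i) (f (i + 1)) (g (i + 1)) (g i).

(* s is the R-evolution map of the pair (f,g): for suitable representatives
   f', g' with f'_i - f'_j + g'_j - g'_i = 0 on each edge (i, j = i+1),
   s i is the (M-)inversion in r_ij = f'_i - f'_j. *)
Definition R_evolution (D : int -> Prop) (f g : int -> vec)
  (s : int -> vec -> vec) : Prop :=
  exists f' g' : int -> vec,
    (forall i, D i -> proj_eq (f i) (f' i) /\ proj_eq (g i) (g' i)) /\
    forall i, edge D i ->
      f' i - f' (i + 1) + g' (i + 1) - g' i = 0 /\
      lf (f' i - f' (i + 1)) (f' i - f' (i + 1)) != 0 /\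
      (forall x, s i x = inversion (f' i - f' (i + 1)) x).

Definition in_span3 (a b c x : vec) : Prop :=
  exists x1 x2 x3 : R, x = x1 *: a + x2 *: b + x3 *: c.

Definition of_type (D : int -> Prop) (p : vec) (s : int -> vec -> vec)
  (m1 m2 : vec) : Prop :=
  \rank (col_mx (col_mx m1 m2) p) = 3%N /\
  forall i x, edge D i -> in_span3 m1 m2 p x -> s i x = x.

End LightCone.

(* Main.v *)
Require Import Defs.
From HB Require Import structures.
From mathcomp Require Import all_boot all_order all_algebra.
From mathcomp Require Import reals.
From mathcomp Require Import ring lra zify.
Import Order.TTheory GRing.Theory Num.Theory.
Local Open Scope ring_scope.

Section Aux.
Variable R : realType.
Implicit Types (x y z a : vec R) (c : R).

Lemma qlfC x y : lf x y = lf y x.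
Proof. by rewrite /lf; apply: eq_bigr => i _; ring. Qed.

Lemma qlfDl x y z : lf (x + y) z = lf x z + lf y z.
Proof. rewrite /lf -big_split; apply: eq_bigr => i _; rewrite !mxE /=; ring. Qed.

Lemma qlfZl c x z : lf (c *: x) z = c * lf x z.
Proof. rewrite /lf mulr_sumr; apply: eq_bigr => i _; rewrite !mxE /=; ring. Qed.

Lemma qlfNl x z : lf (- x) z = - lf x z.
Proof. by rewrite -scaleN1r qlfZl mulN1r. Qed.

Lemma qlfBl x y z : lf (x - y) z = lf x z - lf y z.
Proof. by rewrite qlfDl qlfNl. Qed.

Lemma qlfDr x y z : lf z (x + y) = lf z x + lf z y.
Proof. by rewrite qlfC qlfDl !(qlfC z). Qed.

Lemma qlfZr c x z : lf z (c *: x) = c * lf z x.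
Proof. by rewrite qlfC qlfZl qlfC. Qed.

Lemma qlfNr x z : lf z (- x) = - lf z x.
Proof. by rewrite qlfC qlfNl qlfC. Qed.

Lemma qlfBr x y z : lf z (x - y) = lf z x - lf z y.
Proof. by rewrite qlfDr qlfNr. Qed.

Lemma inv_isom a x y : lf a a != 0 ->
  lf (inversion a x) (inversion a y) = lf x y.
Proof.
move=> Ha; rewrite /inversion !(qlfBl, qlfBr, qlfZl, qlfZr) (qlfC a y).
by field.
Qed.

Lemma invZ a c x : inversion a (c *: x) = c *: inversion a x.
Proof.
rewrite /inversion qlfZl; apply/rowP => j; rewrite !mxE; ring.
Qed.

Lemma invB a x y : inversion a (x - y) = inversion a x - inversion a y.
Proof.
rewrite /inversion qlfBl; apply/rowP => j; rewrite !mxE; ring.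
Qed.

Lemma inv_fix a x : lf x a = 0 -> inversion a x = x.
Proof. by move=> H; rewrite /inversion H mulr0 mul0r scale0r subr0. Qed.

Lemma inv_neq0 a x : lf a a != 0 -> x != 0 -> inversion a x != 0.
Proof.
move=> Ha Hx; apply/eqP => E.
have : lf (inversion a x) a = 0 by rewrite E /lf big1 // => i _; rewrite mxE; ring.
rewrite /inversion qlfBl qlfZl => E2.
have Hxa : lf x a = 0.
  move: E2; set l := lf x a; set A := lf a a => E2.
  have -> : l = - (l - 2 * l / A * A) by field.
  by rewrite E2 oppr0.
by move: E; rewrite inv_fix // => /eqP; rewrite (negbTE Hx).
Qed.

Lemma conc_rel (v1 v2 v3 v4 : vec R) k1 k2 k3 k4 : k1 != 0 ->
  k1 *: v1 - k2 *: v2 + k3 *: v3 - k4 *: v4 = 0 -> concircular v1 v2 v3 v4.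
Proof.
move=> Hk E; rewrite /concircular.
set M := col_mx (col_mx v1 v2) (col_mx v3 v4).
set u := row_mx (row_mx k1%:M (- k2)%:M) (row_mx k3%:M (- k4)%:M) : 'rV[R]_(1 + 1 + (1 + 1)).
have Hu : u *m M = 0.
  by rewrite /u /M !mul_row_col !mul_scalar_mx !scaleNr addrA -E.
have Hu0 : u != 0.
  rewrite /u !row_mx_eq0; apply/negP => /andP [/andP [/eqP H _] _].
  by move/matrixP: H => /(_ 0 0); rewrite !mxE eqxx /= mulr1n => H; rewrite H eqxx in Hk.
have : (u <= kermx M)%MS by apply/sub_kermxP.
move/mxrankS; rewrite mxrank_ker.
have : (0 < \rank u)%N by rewrite lt0n mxrank_eq0.
move: (\rank u) (\rank M) => ru rM /=; lia.
Qed.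

End Aux.

Theorem proposition2p6 (R : realType) (p : vec R) (D : int -> Prop)
  (f g : int -> vec R) (s : int -> vec R -> vec R) (m1 m2 : vec R) (lambda : R) :
  lf p p = -1 ->
  consecutive D ->
  ribaucour_pair D p f g ->
  R_evolution D f g s ->
  of_type D p s m1 m2 ->
  let n := m1 + lambda *: m2 + lf (m1 + lambda *: m2) p *: p in
  lf n n != 0 ->
  ribaucour_pair D p f (fun i => inversion n (g i)) /\
  R_evolution D f (fun i => inversion n (g i)) s.
Proof.
move=> Hpp _ [Hf [Hg Hc]] [f' [g' [Hpe He]]] [_ Hfix] n Hnn.
have Hnp : lf n p = 0.
  by rewrite /n qlfDl qlfZl Hpp; ring.
have Hsp : in_span3 m1 m2 p n by exists 1, lambda, (lf (m1 + lambda *: m2) p); rewrite scale1r.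
have Hrn : forall i, edge D i -> lf (f' i - f' (i + 1)) n = 0.
  move=> i Ei; have [_ [Hr Hs]] := He i Ei.
  have := Hfix i n Ei Hsp; rewrite Hs /inversion => /eqP.
  rewrite subr_eq addrC -subr_eq subrr eq_sym scaler_eq0 => /orP [|/eqP Er].
    rewrite !mulf_eq0 invr_eq0 (negbTE Hr) orbF => /orP [/eqP H|/eqP H].
      by move: H; lra.
    by rewrite qlfC.
  by move: Hr; rewrite Er /lf big1 ?eqxx // => j _; rewrite mxE; ring.
have Hg'' : forall i, edge D i ->
    f' i - f' (i + 1) + inversion n (g' (i + 1)) - inversion n (g' i) = 0.
  move=> i Ei; have [E _] := He i Ei.
  have -> : g' (i + 1) = g' i - (f' i - f' (i + 1)).
    apply/rowP => j; move/rowP/(_ j): E; rewrite !mxE => E; lra.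
  rewrite invB (@inv_fix R _ _ (Hrn i Ei)).
  apply/rowP => j; rewrite !mxE; ring.
split.
  split; first exact: Hf.
  split.
    move=> i Di; have [H1 [H2 H3]] := Hg i Di.
    split; first exact: inv_neq0.
    split; first by rewrite inv_isom.
    have Hpn : lf p n = 0 by rewrite qlfC.
    by rewrite -[X in lf _ X](@inv_fix R n p Hpn) inv_isom.
  move=> i Ei; have [D1 D2] := Ei.
  have [[c1 [Hc1 E1]] [c4 [Hc4 E4]]] := Hpe i D1.
  have [[c2 [Hc2 E2]] [c3 [Hc3 E3]]] := Hpe (i + 1) D2.
  apply: (@conc_rel _ _ _ _ _ c1 c2 c3 c4) => //.
  by rewrite -invZ -invZ -E1 -E2 -E3 -E4 Hg''.
exists f', (fun i => inversion n (g' i)); split.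
  move=> i Di; have [[c1 [Hc1 E1]] [c2 [Hc2 E2]]] := Hpe i Di.
  split; first by exists c1.
  by exists c2; split => //; rewrite E2 invZ.
move=> i Ei; have [_ [H1 H2]] := He i Ei.
by split; [exact: Hg'' | split].
Qed.
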